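(* For groups with topology $G_1,G_2$, the canonical epimorphism $k:F_M(G_1\sqcup G_2)\to\tau(G_1)\ast\tau(G_2)$, which sends each generator $g\in G_i$ to the element $g$ of the factor $\tau(G_i)$, is a topological quotient map.
   Context: A group with topology is a group with an arbitrary topology. $G_1\sqcup G_2$ is the topological disjoint union. $F_M(S)$ is the free (Markov) topological group on a space $S$. For a group with topology $G$, $\tau(G)$ is $G$ with the quotient topology with respect to the multiplication epimorphism $m_G:F_M(G)\to G$ sending each generator $g$ to $g$. For topological groups $H_1,H_2$, $H_1\ast H_2$ is the free topological product, i.e. the coproduct in the category of topological groups (underlying group the free product). *)

(* Defs.v *)
From Stdlib Require Import FunctionalExtensionality PropExtensionality.
Set Implicit Arguments.

Record topology (X : Type) := Topology {
  open : (X -> Prop) -> Prop;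
  open_full : open (fun _ => True);
  open_inter : forall U V, open U -> open V -> open (fun x => U x /\ V x);
  open_union : forall (Fam : (X -> Prop) -> Prop),
      (forall U, Fam U -> open U) -> open (fun x => exists U, Fam U /\ U x)
}.

Definition continuous {X Y : Type} (tX : topology X) (tY : topology Y)
  (f : X -> Y) : Prop :=
  forall V, open tY V -> open tX (fun x => V (f x)).

Definition is_quotient_map {X Y : Type} (tX : topology X) (tY : topology Y)
  (f : X -> Y) : Prop :=
  (forall y, exists x, f x = y) /\
  (forall V, open tY V <-> open tX (fun x => V (f x))).

Definition quotient_topology {X Y : Type} (tX : topology X) (f : X -> Y)
  : topology Y.
Proof.
  refine (@Topology Y (fun V => open tX (fun x => V (f x))) _ _ _).
  - exact (open_full tX).
  - intros U V HU HV. exact (open_inter tX _ _ HU HV).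
  - intros Fam HFam.
    pose (Fam' := fun W : X -> Prop =>
                    exists U, Fam U /\ W = (fun x => U (f x))).
    assert (H := open_union tX Fam').
    assert (E : (fun x => exists W, Fam' W /\ W x)
               = (fun x => exists U, Fam U /\ U (f x))).
    { apply functional_extensionality.
      intro x. apply propositional_extensionality.
      split.
      - intros [W [[U [HU ->]] HW]]. exists U. split; assumption.
      - intros [U [HU HUx]]. exists (fun x => U (f x)). split; [|exact HUx].
        exists U. split; [exact HU|reflexivity]. }
    rewrite <- E. apply H.
    intros W [U [HU ->]]. exact (HFam U HU).
Defined.

Definition sum_topology {X Y : Type} (tX : topology X) (tY : topology Y)
  : topology (X + Y).
Proof.
  refine (@Topology (X + Y)
            (fun W => open tX (fun x => W (inl x)) /\ open tY (fun y => W (inr y)))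
            _ _ _).
  - split; apply open_full.
  - intros U V [HU1 HU2] [HV1 HV2]. split; apply open_inter; assumption.
  - intros Fam HFam. split.
    + pose (Fam' := fun W : X -> Prop =>
                      exists U, Fam U /\ W = (fun x => U (inl x))).
      assert (E : (fun x => exists W, Fam' W /\ W x)
                 = (fun x => exists U, Fam U /\ U (inl x))).
      { apply functional_extensionality.
        intro x. apply propositional_extensionality.
        split.
        - intros [W [[U [HU ->]] HW]]. exists U. split; assumption.
        - intros [U [HU HUx]]. exists (fun x => U (inl x)). split; [|exact HUx].
          exists U. split; [exact HU|reflexivity]. }
      simpl. rewrite <- E. apply open_union.
      intros W [U [HU ->]]. exact (proj1 (HFam U HU)).
    + pose (Fam' := fun W : Y -> Prop =>
                      exists U, Fam U /\ W = (fun y => U (inr y))).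
      assert (E : (fun y => exists W, Fam' W /\ W y)
                 = (fun y => exists U, Fam U /\ U (inr y))).
      { apply functional_extensionality.
        intro x. apply propositional_extensionality.
        split.
        - intros [W [[U [HU ->]] HW]]. exists U. split; assumption.
        - intros [U [HU HUx]]. exists (fun y => U (inr y)). split; [|exact HUx].
          exists U. split; [exact HU|reflexivity]. }
      simpl. rewrite <- E. apply open_union.
      intros W [U [HU ->]]. exact (proj2 (HFam U HU)).
Defined.

Record group (X : Type) := Group {
  gmul : X -> X -> X;
  gone : X;
  ginv : X -> X;
  gmulA : forall x y z, gmul x (gmul y z) = gmul (gmul x y) z;
  gmul1g : forall x, gmul gone x = x;
  gmulVg : forall x, gmul (ginv x) x = gone
}.

Definition is_hom {X Y : Type} (gX : group X) (gY : group Y) (f : X -> Y)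
  : Prop := forall x y, f (gmul gX x y) = gmul gY (f x) (f y).

(** A group with topology is just a group together with a topology
    (no compatibility).  A topological group: multiplication continuous
    for the product topology (unfolded) and inversion continuous. *)
Definition is_topological_group {X : Type} (g : group X) (t : topology X)
  : Prop :=
  (forall W, open t W -> forall x y, W (gmul g x y) ->
     exists A B, open t A /\ open t B /\ A x /\ B y /\
       (forall a b, A a -> B b -> W (gmul g a b))) /\
  continuous t t (ginv g).

Definition is_free_topological_group {S F : Type} (tS : topology S)
  (gF : group F) (tF : topology F) (i : S -> F) : Prop :=
  is_topological_group gF tF /\ continuous tS tF i /\
  forall (H : Type) (gH : group H) (tH : topology H),
    is_topological_group gH tH ->
    forall f : S -> H, continuous tS tH f ->
    exists h : F -> H,
      is_hom gF gH h /\ continuous tF tH h /\ (forall s, h (i s) = f s) /\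
      (forall h' : F -> H, is_hom gF gH h' -> continuous tF tH h' ->
         (forall s, h' (i s) = f s) -> forall x, h' x = h x).

Definition is_free_topological_product {A B P : Type}
  (gA : group A) (tA : topology A) (gB : group B) (tB : topology B)
  (gP : group P) (tP : topology P) (jA : A -> P) (jB : B -> P) : Prop :=
  is_topological_group gP tP /\
  is_hom gA gP jA /\ continuous tA tP jA /\
  is_hom gB gP jB /\ continuous tB tP jB /\
  forall (H : Type) (gH : group H) (tH : topology H),
    is_topological_group gH tH ->
    forall (fA : A -> H) (fB : B -> H),
      is_hom gA gH fA -> continuous tA tH fA ->
      is_hom gB gH fB -> continuous tB tH fB ->
      exists h : P -> H,
        is_hom gP gH h /\ continuous tP tH h /\
        (forall a, h (jA a) = fA a) /\ (forall b, h (jB b) = fB b) /\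
        (forall h' : P -> H, is_hom gP gH h' -> continuous tP tH h' ->
           (forall a, h' (jA a) = fA a) -> (forall b, h' (jB b) = fB b) ->
           forall x, h' x = h x).

(* Main.v *)
Require Import Defs.
From Stdlib Require Import Classical FunctionalExtensionality PropExtensionality ProofIrrelevance.

Lemma open_ext {X} (t : topology X) (U V : X -> Prop) :
  (forall x, U x <-> V x) -> open t U -> open t V.
Proof.
  intros H HU. replace V with U; [exact HU|].
  apply functional_extensionality; intro x; apply propositional_extensionality; apply H.
Qed.

Lemma open_local {X} (t : topology X) (S : X -> Prop) :
  (forall x, S x -> exists A, open t A /\ A x /\ forall y, A y -> S y) -> open t S.
Proof.
  intros H.
  apply open_ext with (fun x => exists A, (open t A /\ forall y, A y -> S y) /\ A x).
  - intro x; split.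
    + intros [A [[_ HA] Ax]]; auto.
    + intros Sx. destruct (H x Sx) as [A [HA [Ax HAS]]]. exists A; auto.
  - apply open_union. intros U [HU _]; exact HU.
Qed.

Lemma open_empty {X} (t : topology X) (U : X -> Prop) : (forall x, ~ U x) -> open t U.
Proof.
  intros H. apply open_ext with (fun x => exists W : X -> Prop, False /\ W x).
  - intro x; split; [intros [W [[] _]] | intros Hx; exfalso; exact (H x Hx)].
  - apply open_union. intros _ [].
Qed.

Lemma open_all {X} (t : topology X) (U : X -> Prop) : (forall x, U x) -> open t U.
Proof.
  intros H. apply open_ext with (fun _ => True).
  - intro x; split; auto.
  - apply open_full.
Qed.

Definition indisc (X : Type) : topology X.
Proof.
  refine (@Topology X (fun U => (forall x, U x) \/ (forall x, ~ U x)) _ _ _).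
  - left; auto.
  - intros U V [HU|HU] [HV|HV].
    + left; auto.
    + right; intros x [_ h]; exact (HV x h).
    + right; intros x [h _]; exact (HU x h).
    + right; intros x [h _]; exact (HU x h).
  - intros Fam HFam.
    destruct (classic (exists U, Fam U /\ exists x, U x)) as [[U [HU [x Hx]]]|N].
    + left. intro y. exists U. split; [exact HU|].
      destruct (HFam U HU) as [h|h]; [apply h| exfalso; exact (h x Hx)].
    + right. intros y [U [HU Hy]]. apply N. eauto.
Defined.

Lemma cont_indisc {X Y} (tX : topology X) (f : X -> Y) : continuous tX (indisc Y) f.
Proof.
  intros V [HV|HV].
  - apply open_all. intro; apply HV.
  - apply open_empty. intro; apply HV.
Qed.

Lemma indisc_tg {X} (g : group X) : is_topological_group g (indisc X).
Proof.
  split; [|apply cont_indisc].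
  intros W [HW|HW] x y Wxy.
  - exists (fun _ => True), (fun _ => True). simpl.
    repeat split; auto.
  - exfalso; exact (HW _ Wxy).
Qed.

Lemma mulgV {X} (g : group X) x : gmul g x (ginv g x) = gone g.
Proof.
  rewrite <- (gmul1g g (gmul g x (ginv g x))).
  rewrite <- (gmulVg g (ginv g x)) at 1.
  rewrite <- gmulA. rewrite (gmulA g (ginv g x) x). rewrite gmulVg, gmul1g, gmulVg.
  reflexivity.
Qed.

Lemma mulg1 {X} (g : group X) x : gmul g x (gone g) = x.
Proof. rewrite <- (gmulVg g x), gmulA, mulgV, gmul1g. reflexivity. Qed.

Lemma hom_one {X Y} {gX : group X} {gY : group Y} {f} :
  is_hom gX gY f -> f (gone gX) = gone gY.
Proof.
  intros hf. assert (E : f (gone gX) = gmul gY (f (gone gX)) (f (gone gX))).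
  { rewrite <- hf, gmul1g. reflexivity. }
  rewrite <- (gmulVg gY (f (gone gX))). rewrite E at 3.
  rewrite gmulA, gmulVg, gmul1g. reflexivity.
Qed.

Lemma hom_inv {X Y} {gX : group X} {gY : group Y} {f} :
  is_hom gX gY f -> forall x, f (ginv gX x) = ginv gY (f x).
Proof.
  intros hf x. rewrite <- (mulg1 gY (f (ginv gX x))).
  rewrite <- (mulgV gY (f x)), gmulA, <- hf, gmulVg, (hom_one hf), gmul1g.
  reflexivity.
Qed.

Lemma hom_comp {X Y Z} {gX : group X} {gY : group Y} {gZ : group Z} {f h} :
  is_hom gX gY f -> is_hom gY gZ h -> is_hom gX gZ (fun x => h (f x)).
Proof. intros hf hh x y. rewrite hf, hh. reflexivity. Qed.

Lemma free_unique {S F H : Type} (tS : topology S) (gF : group F) (tF : topology F)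
  (i : S -> F) (hF : is_free_topological_group tS gF tF i) (gH : group H)
  (f1 f2 : F -> H) : is_hom gF gH f1 -> is_hom gF gH f2 ->
  (forall s, f1 (i s) = f2 (i s)) -> forall x, f1 x = f2 x.
Proof.
  intros h1 h2 E x. destruct hF as [_ [_ U]].
  destruct (U H gH (indisc H) (indisc_tg gH) (fun s => f1 (i s)) (cont_indisc _ _))
    as [h [_ [_ [_ Hu]]]].
  rewrite (Hu f1 h1 (cont_indisc _ _) (fun s => eq_refl)).
  rewrite (Hu f2 h2 (cont_indisc _ _) (fun s => eq_sym (E s))). reflexivity.
Qed.

Lemma prod_unique {A B P H : Type} (gA : group A) (tA : topology A)
  (gB : group B) (tB : topology B) (gP : group P) (tP : topology P)
  (jA : A -> P) (jB : B -> P)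
  (hP : is_free_topological_product gA tA gB tB gP tP jA jB) (gH : group H)
  (f1 f2 : P -> H) : is_hom gP gH f1 -> is_hom gP gH f2 ->
  (forall a, f1 (jA a) = f2 (jA a)) -> (forall b, f1 (jB b) = f2 (jB b)) ->
  forall x, f1 x = f2 x.
Proof.
  intros h1 h2 EA EB x. destruct hP as [_ [hA [_ [hB [_ U]]]]].
  destruct (U H gH (indisc H) (indisc_tg gH) (fun a => f1 (jA a)) (fun b => f1 (jB b))
    (hom_comp hA h1) (cont_indisc _ _) (hom_comp hB h1) (cont_indisc _ _))
    as [h [_ [_ [_ [_ Hu]]]]].
  rewrite (Hu f1 h1 (cont_indisc _ _) (fun _ => eq_refl) (fun _ => eq_refl)).
  rewrite (Hu f2 h2 (cont_indisc _ _) (fun a => eq_sym (EA a)) (fun b => eq_sym (EB b))).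
  reflexivity.
Qed.

Lemma open_rtrans {X} (g : group X) (t : topology X) :
  is_topological_group g t -> forall W c, open t W -> open t (fun x => W (gmul g x c)).
Proof.
  intros [tg _] W c HW. apply open_local. intros x Wx.
  destruct (tg W HW x c Wx) as [A [B [HA [HB [Ax [Bc HAB]]]]]].
  exists A. repeat split; auto.
Qed.

Lemma quot_tg {F P} (gF : group F) (tF : topology F) (gP : group P) (k : F -> P) :
  is_topological_group gF tF -> is_hom gF gP k -> (forall p, exists x, k x = p) ->
  is_topological_group gP (quotient_topology tF k).
Proof.
  intros tg hk sk.
  (* images of open sets are open *)
  assert (Img : forall A, open tF A ->
     open tF (fun z => exists a, A a /\ k a = k z)).
  { intros A HA. apply open_local. intros z [a [Aa Eaz]].
    exists (fun w => A (gmul gF w (gmul gF (ginv gF z) a))). split.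
    - apply open_rtrans; assumption.
    - split.
      + rewrite gmulA, mulgV, gmul1g. exact Aa.
      + intros w Aw. exists (gmul gF w (gmul gF (ginv gF z) a)). split; [exact Aw|].
        rewrite hk, (hk (ginv gF z)), Eaz, <- (hk (ginv gF z) z), gmulVg, <- hk, mulg1.
        reflexivity. }
  split.
  - intros W HW p q Wpq. simpl in HW |- *.
    destruct (sk p) as [x <-]. destruct (sk q) as [y <-].
    rewrite <- hk in Wpq.
    destruct (proj1 tg _ HW x y Wpq) as [A [B [HA [HB [Ax [By HAB]]]]]].
    exists (fun p => exists a, A a /\ k a = p), (fun p => exists b, B b /\ k b = p).
    simpl. split; [exact (Img A HA)|]. split; [exact (Img B HB)|].
    split; [eauto|]. split; [eauto|].
    intros a' b' [a [Aa <-]] [b [Bb <-]]. rewrite <- hk. apply HAB; assumption.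
  - intros W HW. simpl in HW |- *.
    apply open_ext with (fun x => W (k (ginv gF x))).
    + intro x. rewrite (hom_inv hk). tauto.
    + exact (proj2 tg _ HW).
Qed.

Lemma sig_eq' {P : Type} (Q : P -> Prop) (a b : {p | Q p}) :
  proj1_sig a = proj1_sig b -> a = b.
Proof.
  destruct a as [a pa], b as [b pb]; simpl. intros <-.
  f_equal. apply proof_irrelevance.
Qed.

Section IG.
Context {F P : Type} (gF : group F) (gP : group P) (k : F -> P) (hk : is_hom gF gP k).
Definition ISet := {p : P | exists x, k x = p}.
Definition imul (a b : ISet) : ISet.
Proof.
  refine (exist _ (gmul gP (proj1_sig a) (proj1_sig b)) _).
  destruct a as [a [x <-]], b as [b [y <-]]. simpl. exists (gmul gF x y). apply hk.
Defined.
Definition ione : ISet.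
Proof. refine (exist _ (gone gP) _). exists (gone gF). apply (hom_one hk). Defined.
Definition iinv (a : ISet) : ISet.
Proof.
  refine (exist _ (ginv gP (proj1_sig a)) _).
  destruct a as [a [x <-]]. simpl. exists (ginv gF x). apply (hom_inv hk).
Defined.
Definition image_group : group ISet.
Proof.
  refine (@Group _ imul ione iinv _ _ _).
  - intros; apply sig_eq'; simpl; apply gmulA.
  - intros; apply sig_eq'; simpl; apply gmul1g.
  - intros; apply sig_eq'; simpl; apply gmulVg.
Defined.
End IG.

Lemma prod_surj {A B P F : Type} (gA : group A) (tA : topology A)
  (gB : group B) (tB : topology B) (gP : group P) (tP : topology P)
  (jA : A -> P) (jB : B -> P)
  (hP : is_free_topological_product gA tA gB tB gP tP jA jB)
  (gF : group F) (k : F -> P) (hk : is_hom gF gP k)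
  (sA : forall a, exists x, k x = jA a) (sB : forall b, exists x, k x = jB b) :
  forall p, exists x, k x = p.
Proof.
  pose (gS := image_group gF gP k hk).
  pose proof hP as hP'.
  destruct hP as [_ [hA [_ [hB [_ U]]]]].
  destruct (U _ gS (indisc _) (indisc_tg gS)
     (fun a => exist _ (jA a) (sA a)) (fun b => exist _ (jB b) (sB b)))
    as [h [hh [_ [EA [EB _]]]]].
  - intros a b. apply sig_eq'. simpl. apply hA.
  - apply cont_indisc.
  - intros a b. apply sig_eq'. simpl. apply hB.
  - apply cont_indisc.
  - intro p.
    assert (E : proj1_sig (h p) = p).
    { apply (prod_unique _ _ _ _ _ _ _ _ hP' gP (fun p => proj1_sig (h p)) (fun p => p)).
      + intros x y. rewrite hh. reflexivity.
      + intros x y. reflexivity.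
      + intro a. rewrite EA. reflexivity.
      + intro b. rewrite EB. reflexivity. }
    destruct (h p) as [q [x Hx]]. simpl in E. exists x. congruence.
Qed.
Theorem proposition3p10
  (* groups with topology G1, G2 *)
  (G1 : Type) (g1 : group G1) (t1 : topology G1)
  (G2 : Type) (g2 : group G2) (t2 : topology G2)
  (* F_M(G1) with generators i1 and the multiplication epimorphism m1 *)
  (F1 : Type) (gF1 : group F1) (tF1 : topology F1) (i1 : G1 -> F1)
  (hF1 : is_free_topological_group t1 gF1 tF1 i1)
  (m1 : F1 -> G1) (hm1 : is_hom gF1 g1 m1) (hm1i : forall g, m1 (i1 g) = g)
  (* F_M(G2) with generators i2 and the multiplication epimorphism m2 *)
  (F2 : Type) (gF2 : group F2) (tF2 : topology F2) (i2 : G2 -> F2)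
  (hF2 : is_free_topological_group t2 gF2 tF2 i2)
  (m2 : F2 -> G2) (hm2 : is_hom gF2 g2 m2) (hm2i : forall g, m2 (i2 g) = g)
  (* F_M(G1 ⊔ G2) *)
  (F : Type) (gF : group F) (tF : topology F) (i : G1 + G2 -> F)
  (hF : is_free_topological_group (sum_topology t1 t2) gF tF i)
  (* tau(G1) * tau(G2), tau(Gk) = Gk with the quotient topology w.r.t. mk *)
  (P : Type) (gP : group P) (tP : topology P) (j1 : G1 -> P) (j2 : G2 -> P)
  (hP : is_free_topological_product g1 (quotient_topology tF1 m1)
          g2 (quotient_topology tF2 m2) gP tP j1 j2)
  (* the canonical epimorphism k *)
  (k : F -> P) (hk : is_hom gF gP k)
  (hk1 : forall g, k (i (inl g)) = j1 g)
  (hk2 : forall g, k (i (inr g)) = j2 g) :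
  is_quotient_map tF tP k.
Proof.
  pose proof hP as hP'.
  destruct hP as [tgP [hj1 [cj1 [hj2 [cj2 UP]]]]].
  pose proof hF as hF'. destruct hF as [tgF [ci UF]].
  pose proof hF1 as hF1'. destruct hF1 as [tgF1 [ci1 UF1]].
  pose proof hF2 as hF2'. destruct hF2 as [tgF2 [ci2 UF2]].
  destruct (UF1 F gF tF tgF (fun g => i (inl g))) as [io1 [hio1 [cio1 [Eio1 _]]]].
  { intros V HV. exact (proj1 (ci V HV)). }
  destruct (UF2 F gF tF tgF (fun g => i (inr g))) as [io2 [hio2 [cio2 [Eio2 _]]]].
  { intros V HV. exact (proj2 (ci V HV)). }
  assert (E1 : forall x, j1 (m1 x) = k (io1 x)).
  { apply (free_unique _ _ _ _ hF1' gP).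
    - exact (hom_comp hm1 hj1).
    - exact (hom_comp hio1 hk).
    - intro g. rewrite hm1i, Eio1, hk1. reflexivity. }
  assert (E2 : forall x, j2 (m2 x) = k (io2 x)).
  { apply (free_unique _ _ _ _ hF2' gP).
    - exact (hom_comp hm2 hj2).
    - exact (hom_comp hio2 hk).
    - intro g. rewrite hm2i, Eio2, hk2. reflexivity. }
  assert (sk : forall p, exists x, k x = p).
  { apply (prod_surj _ _ _ _ _ _ _ _ hP' gF k hk).
    - intro a. exists (i (inl a)). apply hk1.
    - intro b. exists (i (inr b)). apply hk2. }
  split; [exact sk|].
  intro V. split.
  -
    intro HV.
    destruct (UF P gP tP tgP
      (fun s => match s with inl a => j1 a | inr b => j2 b end)) as [h [hh [ch [Eh _]]]].
    { intros W HW. split.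
      - specialize (cj1 W HW). simpl in cj1.
        apply open_ext with (fun g => W (j1 (m1 (i1 g)))).
        + intro g; rewrite hm1i; tauto.
        + exact (ci1 _ cj1).
      - specialize (cj2 W HW). simpl in cj2.
        apply open_ext with (fun g => W (j2 (m2 (i2 g)))).
        + intro g; rewrite hm2i; tauto.
        + exact (ci2 _ cj2). }
    assert (Ek : forall x, k x = h x).
    { apply (free_unique _ _ _ _ hF' gP k h hk hh).
      intros [a|b]; rewrite Eh; [apply hk1|apply hk2]. }
    apply open_ext with (fun x => V (h x)).
    + intro x; rewrite Ek; tauto.
    + exact (ch V HV).
  - intro HV.
    pose (tQ := quotient_topology tF k).
    assert (tgQ : is_topological_group gP tQ) by (apply (quot_tg gF tF gP k); assumption).
    destruct (UP P gP tQ tgQ j1 j2 hj1) as [h [hh [ch [Eh1 [Eh2 _]]]]].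
    + intros W HW. simpl in HW |- *.
      apply open_ext with (fun x => W (k (io1 x))).
      * intro x; rewrite E1; tauto.
      * exact (cio1 _ HW).
    + exact hj2.
    + intros W HW. simpl in HW |- *.
      apply open_ext with (fun x => W (k (io2 x))).
      * intro x; rewrite E2; tauto.
      * exact (cio2 _ HW).
    + assert (Eid : forall p, h p = p).
      { apply (prod_unique _ _ _ _ _ _ _ _ hP' gP h (fun p => p) hh).
        - intros x y; reflexivity.
        - intro a; apply Eh1.
        - intro b; apply Eh2. }
      apply open_ext with (fun p => V (h p)).
      * intro p; rewrite Eid; tauto.
      * exact (ch V HV).
Qed.
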